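(* Let $V$ and $W$ be calibrated $R$-supermodules and regard $V\oplus W$ as a calibrated $R$-supermodule via $(V\oplus W)_{\mathfrak a}=V_{\mathfrak a}\oplus W_{\mathfrak a}$ and $(V\oplus W)_{\mathfrak c}=V_{\mathfrak c}\oplus W_{\mathfrak c}$. Then for every $d\ge 0$ the map \[\bigoplus_{d_1+d_2=d}(\tilde\Gamma^{d_1}V)\otimes(\tilde\Gamma^{d_2}W)\longrightarrow\tilde\Gamma^d(V\oplus W),\qquad y\otimes y'\mapsto y*y',\] is an isomorphism of $R$-supermodules.
   Context: Let $R$ be a principal ideal domain of characteristic $0$. Supermodules are $\mathbb Z/2$-graded and $|v|$ denotes the parity of a homogeneous element $v$. A calibrated $R$-supermodule is a free $R$-supermodule $V=V_{\bar0}\oplus V_{\bar1}$ of finite rank together with a decomposition $V_{\bar 0}=V_{\mathfrak a}\oplus V_{\mathfrak c}$ into free $R$-submodules. Fix bases $B_{\mathfrak a},B_{\mathfrak c},B_{\bar1}$ of $V_{\mathfrak a},V_{\mathfrak c},V_{\bar1}$, put $B_{\bar0}=B_{\mathfrak a}\sqcup B_{\mathfrak c}$, $B=B_{\bar0}\sqcup B_{\bar1}$, and fix a total order on $B$. The symmetric group $\mathfrak S_d$ acts on the right on $V^{\otimes d}$ by $(v_1\otimes\cdots\otimes v_d)^\sigma=(-1)^{\langle\sigma;\mathbf v\rangle}v_{\sigma1}\otimes\cdots\otimes v_{\sigma d}$ for homogeneous $v_k$, where $\langle\sigma;\mathbf v\rangle$ is the number of pairs $k<l$ with $\sigma^{-1}k>\sigma^{-1}l$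 and $|v_k|=|v_l|=\bar1$; $\Gamma^dV$ is the submodule of $\mathfrak S_d$-invariants. $\mathfrak S_d$ acts on $B^d$ by $(b_1\cdots b_d)\sigma=b_{\sigma1}\cdots b_{\sigma d}$ and $\mathbf b\sim\mathbf b'$ means they lie in one orbit. For $\mathbf b=b_1\cdots b_d\in B^d$ let $\langle\mathbf b\rangle$ be the number of pairs $k<l$ with $b_k,b_l\in B_{\bar1}$ and $b_k>b_l$, let $[\mathbf b:b]=\#\{k:b_k=b\}$ and $[\mathbf b]^!_{\mathfrak c}=\prod_{b\in B_{\mathfrak c}}[\mathbf b:b]!$. Let $\mathrm{Seq}(B,d)$ be the set of $\mathbf b\in B^d$ such that $b_k=b_l$ for some $k\ne l$ only if $b_k\in B_{\bar0}$. For $\mathbf b\in\mathrm{Seq}(B,d)$ put $x_{\mathbf b}=\sum_{\mathbf b'}(-1)^{\langle\mathbf b\rangle+\langle\mathbf b'\rangle}b'_1\otimes\cdots\otimes b'_d$ (sum over the distinct $\mathbf b'\sim\mathbf b$) and $y_{\mathbf b}=[\mathbf b]^!_{\mathfrak c}\,x_{\mathbf b}$. The modified divided power is $\tilde\Gamma^dV=\mathrm{span}_R\{y_{\mathbf b}:\mathbf b\in\mathrm{Seq}(B,d)\}\subseteq\Gamma^dV$. For $w_1\in U^{\otimes c}$, $w_2\in U^{\otimes(d-c)}$ ($U$ any supermodule) the star product is $w_1*w_2=\sum_\sigma(w_1\otimes w_2)^\sigma$, summed over the shortest coset representatives $\sigma$ of $(\mathfrak S_c\times\mathfrak S_{d-c})\backslash\mathfrak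 S_d$; here $V,W\subseteq V\oplus W$ so that $\tilde\Gamma^{d_1}V\otimes\tilde\Gamma^{d_2}W\subseteq (V\oplus W)^{\otimes d_1}\otimes(V\oplus W)^{\otimes d_2}$. *)

(* Defs.v *)
From HB Require Import structures.
From mathcomp Require Import all_boot all_order all_algebra all_fingroup.
Set Implicit Arguments. Unset Strict Implicit. Unset Printing Implicit Defensive.
Import GRing.Theory.
Local Open Scope ring_scope.

Definition is_ideal (R : comNzRingType) (I : R -> Prop) :=
  [/\ I 0, (forall x y, I x -> I y -> I (x + y)) & (forall a x, I x -> I (a * x))].

Definition principal_ideal_domain (R : idomainType) :=
  forall I : R -> Prop, is_ideal I -> exists g : R, forall x, I x <-> exists a, x = a * g.

Definition char0 (R : nzRingType) := forall n : nat, (n%:R == 0 :> R) = (n == 0)%N.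

(* Calibrated bases: each basis vector is in B_a, B_c (even) or B_1 (odd).  *)
(* A calibrated R-supermodule with fixed bases is modelled by its basis     *)
(* B (a finType), a kind function, and a total order given by an injective *)
(* rank  rk : B -> nat  (b > b'  iff  rk b > rk b').                        *)

Inductive ckind := KA | KC | KOdd.
Definition is_odd (k : ckind) : bool := if k is KOdd then true else false.
Definition is_c (k : ckind) : bool := if k is KC then true else false.

(* basis of V^{⊗d}: sequences b_1 ... b_d *)
Notation Seqs B d := {ffun 'I_d -> B}.
(* V^{⊗d}, as coordinate functions on the basis B^d *)
Notation tens R B d := {ffun Seqs B d -> R}.

Section Tensors.
Variable B : finType.
Variable kind : B -> ckind.
Variable rk : B -> nat.
Variable d : nat.

Section WithRing.
Variable R : comNzRingType.

Definition btens (b : Seqs B d) : tens R B d := [ffun s => (s == b)%:R].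

Definition perm_sign_exp (s : 'S_d) (b : Seqs B d) : nat :=
  #|[set p : 'I_d * 'I_d | [&& (p.1 < p.2)%N, ((s^-1)%g p.2 < (s^-1)%g p.1)%N,
                              is_odd (kind (b p.1)) & is_odd (kind (b p.2))]]|.

(* the right action of S_d on V^{⊗d}:
   (b_1⊗...⊗b_d)^s = (-1)^{<s;b>} b_{s1}⊗...⊗b_{sd}, extended linearly *)
Definition tact (s : 'S_d) (f : tens R B d) : tens R B d :=
  [ffun u => \sum_(b : Seqs B d)
       f b * ((-1) ^+ perm_sign_exp s b * btens [ffun k => b (s k)] u)].

End WithRing.

Definition odd_inv (b : Seqs B d) : nat :=
  #|[set p : 'I_d * 'I_d | [&& (p.1 < p.2)%N, is_odd (kind (b p.1)),
                              is_odd (kind (b p.2)) & (rk (b p.2) < rk (b p.1))%N]]|.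

Definition seq_sim (b b' : Seqs B d) : bool :=
  [exists s : 'S_d, b' == [ffun k => b (s k)]].

Definition mult (b : Seqs B d) (b0 : B) : nat := #|[set k | b k == b0]|.

Definition cfact (b : Seqs B d) : nat :=
  (\prod_(b0 | is_c (kind b0)) (mult b b0)`!)%N.

Definition seqok (b : Seqs B d) : bool :=
  [forall k, forall l, ((k != l) && (b k == b l)) ==> ~~ is_odd (kind (b k))].

Section WithRing2.
Variable R : comNzRingType.

Definition xb (b : Seqs B d) : tens R B d :=
  [ffun u => \sum_(b' | seq_sim b b') (-1) ^+ (odd_inv b + odd_inv b') * (u == b')%:R].

Definition yb (b : Seqs B d) : tens R B d := [ffun u => (cfact b)%:R * xb b u].

Definition in_mGamma (f : tens R B d) : Prop :=
  exists c : Seqs B d -> R, f = [ffun u => \sum_(b | seqok b) c b * yb b u].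

End WithRing2.

Definition seq_parity (b : Seqs B d) : bool := odd #|[set k | is_odd (kind (b k))]|.
Definition homog (R : comNzRingType) (p : bool) (f : tens R B d) : Prop :=
  forall u, f u != 0 -> seq_parity u = p.

Definition young (c : nat) (h : 'S_d) : bool := [forall k, (h k < c)%N == (k < c)%N].

Definition perm_length (f : 'I_d -> 'I_d) : nat :=
  #|[set p : 'I_d * 'I_d | (p.1 < p.2)%N && (f p.2 < f p.1)%N]|.

(* shortest representatives of the right cosets (S_c x S_{d-c}) s, where
   (h s)(k) = h (s k) (the composition for which (v^s)^t = v^(s t)) *)
Definition shortest_rep (c : nat) (s : 'S_d) : bool :=
  [forall h : 'S_d, young c h ==> (perm_length s <= perm_length (fun k => h (s k)))%N].

Section WithRing3.
Variable R : comNzRingType.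

(* star product: w is w1 ⊗ w2 in U^{⊗d}, with w1 occupying the first c factors *)
Definition star (c : nat) (w : tens R B d) : tens R B d :=
  [ffun u => \sum_(s : 'S_d | shortest_rep c s) tact s w u].

End WithRing3.
End Tensors.
Arguments btens {B d R} b.
Arguments xb {B} kind rk {d R} b.
Arguments yb {B} kind rk {d R} b.

Definition sum_kind (BV BW : finType) (kV : BV -> ckind) (kW : BW -> ckind)
  (u : BV + BW) : ckind := match u with inl b => kV b | inr b => kW b end.

Definition dsplit (d : nat) (d1 : 'I_d.+1) : (d1 + (d - d1) = d)%N :=
  subnKC (ltnSE (ltn_ord d1)).

Definition concat (BV BW : finType) (d : nat) (d1 : 'I_d.+1)
  (b : Seqs BV d1) (b' : Seqs BW (d - d1)) : Seqs (BV + BW)%type d :=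
  [ffun k => match split (cast_ord (esym (dsplit d1)) k) with
             | inl i => inl (b i) | inr j => inr (b' j) end].

(* V^{⊗d1} ⊗ W^{⊗d2}, with basis B_V^{d1} x B_W^{d2} *)
Notation tens2 R BV BW d1 d2 := {ffun (Seqs BV d1 * Seqs BW d2)%type -> R}.

(* ~Gamma^{d1} V ⊗ ~Gamma^{d2} W, as the submodule of V^{⊗d1} ⊗ W^{⊗d2}
   spanned by the y_b ⊗ y_b' *)
Definition in_mGamma2 (R : comNzRingType) (BV BW : finType)
  (kV : BV -> ckind) (kW : BW -> ckind) (rV : BV -> nat) (rW : BW -> nat)
  (d1 d2 : nat) (T : tens2 R BV BW d1 d2) : Prop :=
  exists c : Seqs BV d1 -> Seqs BW d2 -> R,
    T = [ffun p => \sum_(b | seqok kV b) \sum_(b' | seqok kW b')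
                     c b b' * (yb kV rV b p.1 * yb kW rW b' p.2)].

Definition homog2 (R : comNzRingType) (BV BW : finType)
  (kV : BV -> ckind) (kW : BW -> ckind) (d1 d2 : nat) (p : bool)
  (T : tens2 R BV BW d1 d2) : Prop :=
  forall q, T q != 0 -> seq_parity kV q.1 (+) seq_parity kW q.2 = p.

(* the inclusion V^{⊗d1} ⊗ W^{⊗d2} -> (V⊕W)^{⊗d1} ⊗ (V⊕W)^{⊗(d-d1)} = (V⊕W)^{⊗d} *)
Definition emb (R : comNzRingType) (BV BW : finType) (d : nat) (d1 : 'I_d.+1)
  (T : tens2 R BV BW d1 (d - d1)) : tens R (BV + BW)%type d :=
  [ffun u => \sum_(q : (Seqs BV d1 * Seqs BW (d - d1))%type)
               T q * (u == concat q.1 q.2)%:R].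

(* the map  ⊕_{d1+d2=d} (~Gamma^{d1} V) ⊗ (~Gamma^{d2} W) -> (V⊕W)^{⊗d},
   (T_{d1})_{d1} |-> sum_{d1} star_{d1} (T_{d1}),  i.e.  y ⊗ y' |-> y * y' *)
Definition Phi (R : comNzRingType) (BV BW : finType) (kU : BV + BW -> ckind)
  (d : nat) (F : forall d1 : 'I_d.+1, tens2 R BV BW d1 (d - d1)) :
  tens R (BV + BW)%type d :=
  [ffun u => \sum_(d1 : 'I_d.+1) star kU d1 (emb (F d1)) u].

(* Main.v *)
Require Import Defs.
From HB Require Import structures.
From mathcomp Require Import all_boot all_order all_algebra all_fingroup.
From mathcomp Require Import ring.
Set Implicit Arguments. Unset Strict Implicit. Unset Printing Implicit Defensive.
Import GRing.Theory.
Local Open Scope ring_scope.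

Lemma card_set_sum (T : finType) (P : pred T) :
  #|[set x | P x]| = (\sum_x (P x : nat))%N.
Proof.
rewrite -sum1_card big_mkcond /=; apply: eq_bigr => x _; rewrite inE.
by case: (P x).
Qed.

Lemma sum_even (I : finType) (F : I -> nat) :
  (forall i, ~~ odd (F i)) -> ~~ odd (\sum_i F i).
Proof.
move=> H; apply: (big_ind (fun x => ~~ odd x)) => //= x y.
by rewrite oddD => /negbTE -> /negbTE ->.
Qed.

Lemma pair_even n (G : 'I_n -> 'I_n -> nat) :
  (forall k, ~~ odd (G k k)) ->
  (forall k l : 'I_n, (k < l)%N -> ~~ odd (G k l + G l k)) ->
  ~~ odd (\sum_(k : 'I_n) \sum_(l : 'I_n) G k l).
Proof.
move=> H1 H2.
have -> : (\sum_(k : 'I_n) \sum_(l : 'I_n) G k l = \sum_(k : 'I_n) \sum_(l : 'I_n)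
   (if (k < l)%N then G k l + G l k else if (k == l :> nat) then G k k else 0))%N.
  have E1 : (\sum_(k : 'I_n) \sum_(l : 'I_n) G k l = \sum_(k : 'I_n) \sum_(l : 'I_n) ((if (k < l)%N then G k l else 0)
     + (if (l < k)%N then G k l else 0) + (if (k == l :> nat) then G k l else 0)))%N.
    apply: eq_bigr => k _; apply: eq_bigr => l _.
    by case: (ltngtP k l) => //= _; rewrite ?addn0.
  have E2 : (\sum_(k : 'I_n) \sum_(l : 'I_n) (if (k < l)%N then G k l + G l k else if (k == l :> nat) then G k k else 0)
    = \sum_(k : 'I_n) \sum_(l : 'I_n) ((if (k < l)%N then G k l else 0)
     + (if (k < l)%N then G l k else 0) + (if (k == l :> nat) then G k l else 0)))%N.
    apply: eq_bigr => k _; apply: eq_bigr => l _.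
    by case: (ltngtP k l) => //= [_|/val_inj ->]; rewrite ?addn0.
  rewrite E1 E2.
  under eq_bigr => k _ do rewrite !big_split /=.
  under [RHS]eq_bigr => k _ do rewrite !big_split /=.
  rewrite !big_split /=; congr (_ + _)%N; congr (_ + _)%N.
  by rewrite exchange_big.
apply: sum_even => k; apply: sum_even => l.
by case: (ltngtP k l) => [/H2 //| _ |/val_inj ->].
Qed.

Section Gen.
Variables (B : finType) (kind : B -> ckind) (d : nat).
Implicit Types (b w : Seqs B d) (s : 'S_d).

Definition cnt b (P : pred B) : nat := #|[set k | P (b k)]|.

Lemma cnt_perm b s P : cnt [ffun k => b (s k)] P = cnt b P.
Proof.
rewrite /cnt !card_set_sum (reindex_inj (@perm_inj _ s^-1)).
by apply: eq_bigr => k _; rewrite ffunE permKV.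
Qed.

Lemma sim_refl b : seq_sim b b.
Proof. by apply/existsP; exists 1%g; apply/eqP/ffunP => k; rewrite ffunE perm1. Qed.

Lemma sim_sym b b' : seq_sim b b' -> seq_sim b' b.
Proof.
move=> /existsP [s /eqP ->]; apply/existsP; exists s^-1%g.
by apply/eqP/ffunP => k; rewrite !ffunE permKV.
Qed.

Lemma sim_trans b1 b2 b3 : seq_sim b1 b2 -> seq_sim b2 b3 -> seq_sim b1 b3.
Proof.
move=> /existsP [s /eqP ->] /existsP [t /eqP ->]; apply/existsP; exists (t * s)%g.
by apply/eqP/ffunP => k; rewrite !ffunE permM.
Qed.

Lemma sim_perm b s : seq_sim b [ffun k => b (s k)].
Proof. by apply/existsP; exists s. Qed.

Lemma sim_cnt b b' P : seq_sim b b' -> cnt b P = cnt b' P.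
Proof. by move=> /existsP [s /eqP ->]; rewrite cnt_perm. Qed.

Lemma count_tuple b P : count P [tuple b i | i < d] = cnt b P.
Proof.
rewrite /cnt card_set_sum -sum1_count /= big_map enumT -/(index_enum _) big_mkcond /=.
by apply: eq_bigr => i _; case: (P (b i)).
Qed.

Lemma cnt_sim b b' : (forall P, cnt b P = cnt b' P) -> seq_sim b b'.
Proof.
move=> H.
have : perm_eq [tuple b' i | i < d] [tuple b i | i < d].
  by apply/seq.permP => P; rewrite !count_tuple H.
case/tuple_permP => p Hp; apply/existsP; exists p; apply/eqP/ffunP => k.
have /val_inj Hp' := Hp.
by have := congr1 (fun t => tnth t k) Hp'; rewrite !tnth_mktuple ffunE.
Qed.

Lemma mult_cnt b x : mult b x = cnt b (pred1 x).
Proof. by []. Qed.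

Lemma seqokE b : seqok kind b = [forall x, is_odd (kind x) ==> (mult b x <= 1)%N].
Proof.
apply/idP/idP.
- move=> H; apply/forallP => x; apply/implyP => Ox; apply/card_le1_eqP => k l.
  rewrite !inE => /eqP Hk /eqP Hl; case: (eqVneq l k) => // Hne.
  have := implyP (forallP (forallP H l) k); rewrite Hne Hk Hl eqxx Ox /=.
  by move=> /(_ isT).
- move=> H; apply/forallP => k; apply/forallP => l; apply/implyP => /andP [Hne /eqP Heq].
  apply/negP => Ok; have := implyP (forallP H (b k)) Ok; rewrite leqNgt => /negP; apply.
  apply/card_gt1P; exists k, l; by rewrite !inE Heq eqxx.
Qed.

Lemma sim_mult b b' x : seq_sim b b' -> mult b x = mult b' x.
Proof. by move=> H; rewrite !mult_cnt (sim_cnt _ H). Qed.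

Lemma sim_seqok b b' : seq_sim b b' -> seqok kind b = seqok kind b'.
Proof.
move=> H; rewrite !seqokE; apply: eq_forallb => x; by rewrite (sim_mult _ H).
Qed.

Lemma sim_cfact b b' : seq_sim b b' -> cfact kind b = cfact kind b'.
Proof. by move=> H; apply: eq_bigr => x _; rewrite (sim_mult _ H). Qed.

Lemma oinv_perm (rk : B -> nat) b s :
  (forall k l, k != l -> is_odd (kind (b k)) -> is_odd (kind (b l)) -> rk (b k) != rk (b l)) ->
  odd (odd_inv kind rk [ffun k => b (s k)]) =
  odd (odd_inv kind rk b) (+) odd (perm_sign_exp kind s b).
Proof.
move=> Hd.
set O := fun k => is_odd (kind (b k)).
have E1 : odd_inv kind rk b = (\sum_(k : 'I_d) \sum_(l : 'I_d)
   ([&& (k < l)%N, O k, O l & (rk (b l) < rk (b k))%N] : nat))%N.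
  by rewrite /odd_inv card_set_sum pair_bigA.
have E2 : odd_inv kind rk [ffun k => b (s k)] = (\sum_(k : 'I_d) \sum_(l : 'I_d)
   ([&& ((s^-1)%g k < (s^-1)%g l)%N, O k, O l & (rk (b l) < rk (b k))%N] : nat))%N.
  have E0 : forall w : Seqs B d, odd_inv kind rk w = (\sum_(k : 'I_d) \sum_(l : 'I_d)
   ([&& (k < l)%N, is_odd (kind (w k)), is_odd (kind (w l)) & (rk (w l) < rk (w k))%N] : nat))%N.
    by move=> w; rewrite /odd_inv card_set_sum pair_bigA.
  rewrite E0 (reindex_inj (@perm_inj _ s^-1)).
  apply: eq_bigr => k _; rewrite (reindex_inj (@perm_inj _ s^-1)).
  by apply: eq_bigr => l _; rewrite !ffunE !permKV.
have E3 : perm_sign_exp kind s b = (\sum_(k : 'I_d) \sum_(l : 'I_d)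
   ([&& (k < l)%N, ((s^-1)%g l < (s^-1)%g k)%N, O k & O l] : nat))%N.
  by rewrite /perm_sign_exp card_set_sum pair_bigA.
suff H : ~~ odd (odd_inv kind rk [ffun k => b (s k)] + odd_inv kind rk b
                 + perm_sign_exp kind s b).
  move: H; rewrite !oddD.
  by case: (odd (odd_inv _ _ [ffun _ => _])); case: (odd (odd_inv _ _ b));
     case: (odd (perm_sign_exp _ _ _)).
rewrite E1 E2 E3 -!big_split /=.
under eq_bigr => k _ do rewrite -!big_split /=.
apply: pair_even => [k|k l Hkl]; first by rewrite !ltnn.
have Hkl' : (l < k)%N = false by rewrite ltnNge ltnW.
rewrite Hkl Hkl' /=.
case Ok : (O k); case Ol : (O l); rewrite /= ?andbF //.
have Hr : rk (b k) != rk (b l) by apply: Hd => //; rewrite neq_ltn Hkl.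
have Hs : (s^-1)%g k != (s^-1)%g l.
  by apply/negP => /eqP /perm_inj Ekl; rewrite Ekl ltnn in Hkl.
move: Hr Hs; rewrite -!val_eqE /=.
by case: (ltngtP (rk (b l)) (rk (b k))); case: (ltngtP ((s^-1)%g l : nat) ((s^-1)%g k)).
Qed.

End Gen.

Section Shuffle.
Variable d : nat.
Implicit Types (s t : 'S_d) (S : {set 'I_d}).

Definition canf S (k : 'I_d) : nat :=
  if k \in S then #|[set j in S | (j < k)%N]| else (#|S| + #|[set j in ~: S | (j < k)%N]|)%N.

Lemma canf_blk S k : (canf S k < #|S|)%N = (k \in S).
Proof.
rewrite /canf; case: ifP => Hk; last by rewrite ltnNge leq_addr.
apply: proper_card; apply/properP; split.
  by apply/subsetP => j; rewrite inE => /andP [].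
by exists k => //; rewrite inE ltnn andbF.
Qed.

Lemma canf_lt S k : (canf S k < d)%N.
Proof.
case: (boolP (k \in S)) => Hk.
  by have := max_card S; rewrite card_ord => HS; apply: leq_trans HS; rewrite canf_blk.
rewrite /canf (negbTE Hk) -[X in (_ < X)%N](card_ord d) -(cardsC S) ltn_add2l.
apply: proper_card; apply/properP; split.
  by apply/subsetP => j; rewrite inE => /andP [].
by exists k; rewrite ?inE ?ltnn ?andbF.
Qed.

Lemma canf_mono S (k l : 'I_d) : (k < l)%N -> (k \in S) = (l \in S) -> (canf S k < canf S l)%N.
Proof.
move=> Hkl Heq; rewrite /canf -Heq; case: ifP => Hk; last rewrite ltn_add2l.
  apply: proper_card; apply/properP; split.
    by apply/subsetP => j; rewrite !inE => /andP [-> /ltn_trans]; apply.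
  by exists k; rewrite !inE ?ltnn ?andbF ?Hk ?Hkl.
apply: proper_card; apply/properP; split.
  by apply/subsetP => j; rewrite !inE => /andP [-> /ltn_trans]; apply.
by exists k; rewrite !inE ?ltnn ?andbF ?Hk ?Hkl.
Qed.

Definition canO S k : 'I_d := Ordinal (canf_lt S k).

Lemma canO_inj S : injective (canO S).
Proof.
move=> k l /(congr1 val) /= H.
have Hb : (k \in S) = (l \in S) by rewrite -!canf_blk H.
apply: val_inj => /=; case: (ltngtP k l) => // Hkl.
  by have := canf_mono Hkl Hb; rewrite H ltnn.
by have := canf_mono Hkl (esym Hb); rewrite H ltnn.
Qed.

Definition canp S : 'S_d := perm (@canO_inj S).

Lemma canpE S k : (canp S k : nat) = canf S k.
Proof. by rewrite permE. Qed.

Definition monob (c : nat) s : Prop :=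
  forall k l : 'I_d, (k < l)%N -> (s k < c)%N = (s l < c)%N -> (s k < s l)%N.

Lemma canp_blk S k : (canp S k < #|S|)%N = (k \in S).
Proof. by rewrite canpE canf_blk. Qed.

Lemma canp_mono S : monob #|S| (canp S).
Proof. by move=> k l Hkl; rewrite !canp_blk canpE canpE; apply: canf_mono. Qed.

Lemma card_ord_lt v : (v <= d)%N -> #|[set i : 'I_d | (i < v)%N]| = v.
Proof.
move=> Hv.
rewrite card_set_sum -(big_mkord xpredT (fun i => nat_of_bool (i < v)%N)).
rewrite (big_cat_nat (leq0n v) Hv) /=.
rewrite (eq_big_nat _ _ (F2 := fun=> 1%N)); last by move=> i /andP [_ ->].
rewrite sum_nat_const_nat muln1 subn0 big_nat_cond big1 ?addn0 //.
by move=> i; rewrite andbT => /andP [Hi _]; rewrite ltnNge Hi.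
Qed.

Lemma card_lt_perm s v : (v <= d)%N -> #|[set j | (s j < v)%N]| = v.
Proof.
move=> Hv; transitivity #|s @^-1: [set i : 'I_d | (i < v)%N]|; last by rewrite card_preimset ?card_ord_lt //; apply: perm_inj.
by apply: eq_card => j; rewrite !inE.
Qed.

Lemma mono_canf c s : (c <= d)%N -> monob c s ->
  forall k, (s k : nat) = canf [set j | (s j < c)%N] k.
Proof.
move=> Hc Hm k; rewrite /canf inE.
have Hsk : (s k <= d)%N by apply: ltnW.
rewrite -{1}(card_lt_perm s Hsk).
case: ifP => Hk.
  apply: eq_card => j; rewrite !inE; apply/idP/idP.
    move=> Hj; have Hjc : (s j < c)%N by apply: ltn_trans Hj Hk.
    rewrite Hjc /=; case: (ltngtP j k) => // Hkj.
      by have := Hm _ _ Hkj; rewrite Hjc Hk => /(_ erefl); rewrite ltnNge ltnW.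
    by move: Hj; rewrite (val_inj Hkj) ltnn.
  by move=> /andP [Hj Hjk]; apply: Hm => //; rewrite Hj Hk.
rewrite -(cardsID [set j | (s j < c)%N]).
congr (_ + _)%N.
  apply: eq_card => j; rewrite !inE; apply/idP/idP; first by case/andP.
  move=> Hj; rewrite Hj andbT; apply: (leq_trans Hj); by rewrite leqNgt Hk.
apply: eq_card => j; rewrite !inE; apply/idP/idP.
  move=> /andP [Hj Hjk]; rewrite Hj /=; case: (ltngtP j k) => // Hkj.
    have := Hm _ _ Hkj; rewrite Hk (negbTE Hj) => /(_ erefl).
    by rewrite ltnNge ltnW.
  by move: Hjk; rewrite (val_inj Hkj) ltnn.
move=> /andP [Hj Hjk]; rewrite Hj /=; apply: Hm => //; by rewrite Hk (negbTE Hj).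
Qed.

Lemma mono_uniq c s t : (c <= d)%N -> monob c s -> monob c t ->
  (forall k, (s k < c)%N = (t k < c)%N) -> s = t.
Proof.
move=> Hc Hs Ht Hb; apply/permP => k; apply: val_inj => /=.
rewrite (mono_canf Hc Hs k) (mono_canf Hc Ht k); congr canf.
by apply/setP => j; rewrite !inE Hb.
Qed.

Lemma mono_shortest c s : monob c s -> shortest_rep c s.
Proof.
move=> Hm; apply/forallP => h; apply/implyP => /forallP Hy.
rewrite /perm_length; apply: subset_leq_card; apply/subsetP => [[p1 p2]].
rewrite !inE /= => /andP [H12 Hs]; rewrite H12 /=.
have Hy1 := eqP (Hy (s p1)); have Hy2 := eqP (Hy (s p2)).
case E1 : (s p1 < c)%N; case E2 : (s p2 < c)%N.
- by have := Hm _ _ H12; rewrite E1 E2 => /(_ erefl); rewrite ltnNge ltnW.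
- by move: Hs E2; rewrite ltnNge => /negP; move=> H /negbT; rewrite -leqNgt => H'; case: H; apply: ltnW; apply: leq_trans E1 H'.
- apply: (@leq_trans c); first by rewrite Hy2.
  by rewrite leqNgt Hy1 E1.
- by have := Hm _ _ H12; rewrite E1 E2 => /(_ erefl); rewrite ltnNge ltnW.
Qed.

Lemma shortest_mono c s : (c <= d)%N -> shortest_rep c s -> monob c s.
Proof.
move=> Hc Hsh k l Hkl Hb.
case: (ltngtP (s k) (s l)) => // H.
  exfalso.
  pose S := [set j | (s j < c)%N].
  have HS : #|S| = c by rewrite card_lt_perm.
  pose t := canp S.
  pose h := (s^-1 * t)%g.
  have Hh : forall j, h (s j) = t j by move=> j; rewrite permM permK.
  have Hyh : young c h.
    apply/forallP => j; rewrite permM; apply/eqP.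
    by rewrite -{1}HS canp_blk inE permKV.
  have := implyP (forallP Hsh h) Hyh.
  have -> : perm_length (fun k => h (s k)) = perm_length t.
    by rewrite /perm_length; apply: eq_card => p; rewrite !inE !Hh.
  apply/negP; rewrite -ltnNge; apply: proper_card; apply/properP; split.
    apply/subsetP => [[p1 p2]]; rewrite !inE /= => /andP [H12 Ht]; rewrite H12 /=.
    have Hm := @canp_mono S.
    case E1 : (p1 \in S); case E2 : (p2 \in S).
    - by have := Hm _ _ H12; rewrite !canp_blk E1 E2 => /(_ erefl); rewrite ltnNge ltnW.
    - by move: Ht; rewrite ltnNge; move/negP; case; apply: ltnW;
         apply: (@leq_trans #|S|); [rewrite canp_blk E1 | rewrite leqNgt canp_blk E2].
    - move: E1 E2; rewrite !inE => E1 E2.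
      by apply: (@leq_trans c); [rewrite E2 | rewrite leqNgt E1].
    - by have := Hm _ _ H12; rewrite !canp_blk E1 E2 => /(_ erefl); rewrite ltnNge ltnW.
  exists (k, l); rewrite !inE /= Hkl ?H //=.
  have := @canp_mono S k l Hkl; rewrite !canp_blk !inE Hb => /(_ erefl).
  by move=> H'; rewrite -leqNgt; apply: ltnW.
by move: Hkl; rewrite (perm_inj (val_inj H)) ltnn.
Qed.

Lemma young1 c : monob c 1%g.
Proof. by move=> k l Hkl _; rewrite !perm1. Qed.

End Shuffle.

Lemma oinvE (B : finType) (kind : B -> ckind) (d : nat) (rk : B -> nat) (w : Seqs B d) :
  odd_inv kind rk w = (\sum_(k : 'I_d) \sum_(l : 'I_d)
   ([&& (k < l)%N, is_odd (kind (w k)), is_odd (kind (w l)) & (rk (w l) < rk (w k))%N] : nat))%N.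
Proof. by rewrite /odd_inv card_set_sum pair_bigA. Qed.

Definition is_inl (BV BW : Type) (x : BV + BW) : bool := if x is inl _ then true else false.

Section Concat.
Variables (BV BW : finType) (d : nat) (d1 : 'I_d.+1).

Definition lk (i : 'I_d1) : 'I_d := cast_ord (dsplit d1) (lshift (d - d1) i).
Definition rkk (j : 'I_(d - d1)) : 'I_d := cast_ord (dsplit d1) (rshift d1 j).

Lemma concat_lk (q1 : Seqs BV d1) (q2 : Seqs BW (d - d1)) i : concat q1 q2 (lk i) = inl (q1 i).
Proof. by rewrite /concat ffunE /lk cast_ordK -[lshift _ _]/(unsplit (inl i)) unsplitK. Qed.

Lemma concat_rk (q1 : Seqs BV d1) (q2 : Seqs BW (d - d1)) j : concat q1 q2 (rkk j) = inr (q2 j).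
Proof. by rewrite /concat ffunE /rkk cast_ordK -[rshift _ _]/(unsplit (inr j)) unsplitK. Qed.

Lemma ord_cases (k : 'I_d) : (exists i, k = lk i) \/ (exists j, k = rkk j).
Proof.
case: (splitP (cast_ord (esym (dsplit d1)) k)) => [i Hi|j Hj]; [left; exists i|right; exists j];
  by apply: val_inj; rewrite /= -?Hi -?Hj.
Qed.

Lemma big_concat (R' : Type) (idx : R') (op : Monoid.com_law idx) (F : 'I_d -> R') :
  \big[op/idx]_k F k = op (\big[op/idx]_i F (lk i)) (\big[op/idx]_j F (rkk j)).
Proof.
rewrite (reindex (cast_ord (dsplit d1))) /=; last first.
  by exists (cast_ord (esym (dsplit d1))) => x _; rewrite ?cast_ordK ?cast_ordKV.
by rewrite big_split_ord.
Qed.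

Lemma big_concat2 (F : 'I_d -> 'I_d -> nat) :
  (\sum_k \sum_l F k l = \sum_i \sum_i' F (lk i) (lk i') + \sum_i \sum_j F (lk i) (rkk j)
    + \sum_j \sum_i F (rkk j) (lk i) + \sum_j \sum_j' F (rkk j) (rkk j'))%N.
Proof.
have E : forall k, (\sum_l F k l = \sum_i F k (lk i) + \sum_j F k (rkk j))%N.
  by move=> k; apply: big_concat.
rewrite big_concat (eq_bigr _ (fun i _ => E (lk i))) (eq_bigr _ (fun j _ => E (rkk j))).
by rewrite !big_split /= !addnA.
Qed.

Lemma cnt_concat (q1 : Seqs BV d1) (q2 : Seqs BW (d - d1)) P :
  cnt (concat q1 q2) P = (cnt q1 (fun x => P (inl x)) + cnt q2 (fun y => P (inr y)))%N.
Proof.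
rewrite /cnt !card_set_sum big_concat; congr (_ + _)%N; apply: eq_bigr => i _;
  by rewrite ?concat_lk ?concat_rk.
Qed.

Lemma concat_inj (q1 q1' : Seqs BV d1) (q2 q2' : Seqs BW (d - d1)) : concat q1 q2 = concat q1' q2' -> q1 = q1' /\ q2 = q2'.
Proof.
move=> H; split; apply/ffunP => i.
  by have := congr1 (fun f : Seqs (BV + BW)%type d => f (lk i)) H; rewrite /= !concat_lk => -[].
by have := congr1 (fun f : Seqs (BV + BW)%type d => f (rkk i)) H; rewrite /= !concat_rk => -[].
Qed.

Lemma isl_concat (q1 : Seqs BV d1) (q2 : Seqs BW (d - d1)) k : is_inl (concat q1 q2 k) = (k < d1)%N.
Proof.
case: (ord_cases k) => [[i ->]|[j ->]]; rewrite ?concat_lk ?concat_rk /=.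
  by rewrite ltn_ord.
by rewrite ltnNge leq_addr.
Qed.

Lemma cnt_false (B : finType) n (b : Seqs B n) : cnt b (fun _ => false) = 0%N.
Proof. by rewrite /cnt card_set_sum big1. Qed.

Lemma sim_concat (q1 q1' : Seqs BV d1) (q2 q2' : Seqs BW (d - d1)) :
  seq_sim (concat q1 q2) (concat q1' q2') = seq_sim q1 q1' && seq_sim q2 q2'.
Proof.
apply/idP/idP.
  move=> H; apply/andP; split; apply: cnt_sim => P.
    have := sim_cnt (fun z => if z is inl x then P x else false) H.
    by rewrite !cnt_concat /= !cnt_false !addn0.
  have := sim_cnt (fun z => if z is inr x then P x else false) H.
  by rewrite !cnt_concat /= !cnt_false.
case/andP => H1 H2; apply: cnt_sim => P.
by rewrite !cnt_concat (sim_cnt _ H1) (sim_cnt _ H2).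
Qed.

Lemma sim_concatP (q1 q1' : Seqs BV d1) (q2 q2' : Seqs BW (d - d1)) :
  seq_sim q1 q1' -> seq_sim q2 q2' -> seq_sim (concat q1 q2) (concat q1' q2').
Proof. by move=> H1 H2; rewrite sim_concat H1 H2. Qed.

Variables (kV : BV -> ckind) (kW : BW -> ckind).
Local Notation kU := (sum_kind kV kW).

Lemma mult_concat_l (q1 : Seqs BV d1) (q2 : Seqs BW (d - d1)) x : mult (concat q1 q2) (inl x) = mult q1 x.
Proof. by rewrite !mult_cnt cnt_concat cnt_false addn0. Qed.

Lemma mult_concat_r (q1 : Seqs BV d1) (q2 : Seqs BW (d - d1)) y : mult (concat q1 q2) (inr y) = mult q2 y.
Proof. by rewrite !mult_cnt cnt_concat cnt_false. Qed.

Lemma cfact_concat (q1 : Seqs BV d1) (q2 : Seqs BW (d - d1)) : cfact kU (concat q1 q2) = (cfact kV q1 * cfact kW q2)%N.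
Proof.
rewrite /cfact big_sumType /=; congr (_ * _)%N; apply: eq_bigr => x _;
  by rewrite ?mult_concat_l ?mult_concat_r.
Qed.

Lemma seqok_concat (q1 : Seqs BV d1) (q2 : Seqs BW (d - d1)) : seqok kU (concat q1 q2) = seqok kV q1 && seqok kW q2.
Proof.
rewrite !seqokE; apply/idP/idP.
  move/forallP => H; apply/andP; split; apply/forallP => x.
    by have := H (inl x); rewrite /= mult_concat_l.
  by have := H (inr x); rewrite /= mult_concat_r.
case/andP => /forallP H1 /forallP H2; apply/forallP => -[x|y] /=.
  by rewrite mult_concat_l; apply: H1.
by rewrite mult_concat_r; apply: H2.
Qed.

Lemma parity_concat (q1 : Seqs BV d1) (q2 : Seqs BW (d - d1)) :
  seq_parity kU (concat q1 q2) = seq_parity kV q1 (+) seq_parity kW q2.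
Proof.
rewrite /seq_parity.
have := cnt_concat q1 q2 (fun x => is_odd (kU x)); rewrite /cnt => ->.
by rewrite oddD.
Qed.

Variables (rV : BV -> nat) (rW : BW -> nat).

Definition rS (x : BV + BW) : nat :=
  match x with inl a => rV a | inr b => ((\max_a rV a).+1 + rW b)%N end.

Lemma rS_big a b : (rV a < (\max_a rV a).+1 + rW b)%N.
Proof. by rewrite addSn ltnS (leq_trans (leq_bigmax a)) ?leq_addr. Qed.

Lemma rS_inj : injective rV -> injective rW -> injective rS.
Proof.
move=> HV HW [a|b] [a'|b'] /= H.
- by rewrite (HV _ _ H).
- by have := rS_big a b'; rewrite H ltnn.
- by have := rS_big a' b; rewrite H ltnn.
- by congr inr; apply: HW; apply/eqP; rewrite -(eqn_add2l (\max_a rV a).+1) H.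
Qed.

Lemma oinv_concat (q1 : Seqs BV d1) (q2 : Seqs BW (d - d1)) :
  odd_inv kU rS (concat q1 q2) = (odd_inv kV rV q1 + odd_inv kW rW q2)%N.
Proof.
rewrite !oinvE big_concat2.
have -> : (\sum_i \sum_(j : 'I_(d - d1)) ([&& (lk i < rkk j)%N,
     is_odd (kU (concat q1 q2 (lk i))), is_odd (kU (concat q1 q2 (rkk j)))
   & (rS (concat q1 q2 (rkk j)) < rS (concat q1 q2 (lk i)))%N] : nat) = 0)%N.
  apply: big1 => i _; apply: big1 => j _; rewrite concat_lk concat_rk /=.
  have -> : ((\max_a rV a).+1 + rW (q2 j) < rV (q1 i))%N = false.
    by apply/negbTE; rewrite -leqNgt ltnW ?rS_big.
  by rewrite !andbF.
have -> : (\sum_(j : 'I_(d - d1)) \sum_i ([&& (rkk j < lk i)%N,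
     is_odd (kU (concat q1 q2 (rkk j))), is_odd (kU (concat q1 q2 (lk i)))
   & (rS (concat q1 q2 (lk i)) < rS (concat q1 q2 (rkk j)))%N] : nat) = 0)%N.
  apply: big1 => j _; apply: big1 => i _.
  by rewrite /= ltnNge (leq_trans (ltnW (ltn_ord i))) ?leq_addr.
rewrite addn0 addn0; congr (_ + _)%N.
  apply: eq_bigr => i _; apply: eq_bigr => i' _; by rewrite !concat_lk.
apply: eq_bigr => j _; apply: eq_bigr => j' _; rewrite !concat_rk /= ltn_add2l.
by rewrite ltn_add2l.
Qed.

End Concat.

Lemma sgnK (R : comNzRingType) (a b : nat) : (-1) ^+ (a + b) * (-1) ^+ b = (-1) ^+ a :> R.
Proof. by rewrite -exprD -addnA addnn -signr_odd oddD odd_double addbF signr_odd. Qed.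

Lemma sgnMK (R : comNzRingType) (a : nat) (x : R) : x * (-1) ^+ a * (-1) ^+ a = x.
Proof. by rewrite -mulrA -exprD addnn -signr_odd odd_double expr0 mulr1. Qed.

Section Alg.
Variables (B : finType) (kind : B -> ckind) (rk : B -> nat) (d : nat) (R : comNzRingType).
Implicit Types (b u v : Seqs B d).

Local Notation sg n := ((-1) ^+ n : R).
Local Notation oi := (odd_inv kind rk).

Lemma xbE b u : xb kind rk (R:=R) b u = if seq_sim b u then sg (oi b + oi u) else 0.
Proof.
rewrite ffunE; case: ifP => H.
  rewrite (bigD1 u) //= eqxx mulr1 big1 ?addr0 // => b' /andP [_ Hne].
  by rewrite eq_sym (negbTE Hne) mulr0.
apply: big1 => b' Hb'; case: eqP => [Eu|]; last by rewrite mulr0.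
by rewrite -Eu H in Hb'.
Qed.

Lemma ybE b u : yb kind rk (R:=R) b u = (cfact kind u)%:R * xb kind rk (R:=R) b u.
Proof.
rewrite ffunE xbE; case: ifP => H; last by rewrite !mulr0.
by rewrite (sim_cfact kind H).
Qed.

Lemma yb_sign b u : yb kind rk (R:=R) b u * sg (oi u) =
  if seq_sim b u then (cfact kind b)%:R * sg (oi b) else 0.
Proof.
rewrite ffunE xbE; case: ifP => H; last by rewrite mulr0 mul0r.
by rewrite -mulrA sgnK.
Qed.

Lemma yb0 b u : seqok kind b -> ~~ seqok kind u -> yb kind rk (R:=R) b u = 0.
Proof.
move=> Hb Hu; rewrite ybE xbE; case: ifP => H; last by rewrite mulr0.
by rewrite -(sim_seqok kind H) Hb in Hu.
Qed.

Definition rep u : Seqs B d := [arg min_(v < u | seq_sim u v) enum_rank v].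

Lemma rep_sim u : seq_sim u (rep u).
Proof. by rewrite /rep; case: arg_minnP => //; apply: sim_refl. Qed.

Lemma rep_eq u v : seq_sim u v -> rep u = rep v.
Proof.
move=> H; rewrite /rep.
case: (arg_minnP (fun w => (enum_rank w : nat)) (sim_refl u)) => x Hx Hmx.
case: (arg_minnP (fun w => (enum_rank w : nat)) (sim_refl v)) => y Hy Hmy.
apply: enum_rank_inj; apply: val_inj; apply/eqP; rewrite eqn_leq.
rewrite Hmx ?Hmy //; first by apply: sim_trans (sim_sym H) Hx.
by apply: sim_trans H Hy.
Qed.

Lemma yb_rep b u : b = rep b -> b != rep u -> yb kind rk (R:=R) b u = 0.
Proof.
move=> Hb Hne; rewrite ybE xbE; case: ifP => H; last by rewrite mulr0.
by rewrite Hb (rep_eq H) eqxx in Hne.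
Qed.

Lemma yb_repu u : seqok kind u ->
  yb kind rk (R:=R) (rep u) u = (cfact kind u)%:R * sg (oi (rep u) + oi u).
Proof. by move=> Hu; rewrite ybE xbE (sim_sym (rep_sim u)). Qed.

Definition Pgen (f : tens R B d) : Prop :=
  [/\ forall u, f u != 0 -> seqok kind u,
      forall u u', seq_sim u u' -> f u * sg (oi u) = f u' * sg (oi u')
    & exists g : Seqs B d -> R, forall u, f u = (cfact kind u)%:R * g u].

Lemma mGamma_P f : in_mGamma kind rk f -> Pgen f.
Proof.
case=> c ->; split.
- move=> u; rewrite ffunE => Hu; apply/negPn/negP => Hnot; move/eqP: Hu; apply.
  by apply: big1 => b Hb; rewrite yb0 ?mulr0.
- move=> u u' Hs; rewrite !ffunE !mulr_suml; apply: eq_bigr => b Hb.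
  rewrite -!mulrA !yb_sign.
  have -> : seq_sim b u = seq_sim b u' => //.
  by apply/idP/idP => H; [apply: sim_trans H Hs | apply: sim_trans H (sim_sym Hs)].
- exists (fun u => \sum_(b | seqok kind b) c b * xb kind rk (R:=R) b u) => u.
  by rewrite ffunE mulr_sumr; apply: eq_bigr => b _; rewrite ybE mulrCA.
Qed.

Lemma P_mGamma f : Pgen f -> in_mGamma kind rk f.
Proof.
case=> Hsupp Hsign [g Hg].
exists (fun b => if b == rep b then g b else 0); apply/ffunP => u; rewrite ffunE.
case: (boolP (seqok kind u)) => Hu.
  rewrite (bigD1 (rep u)) /=; last by rewrite -(sim_seqok kind (rep_sim u)).
  rewrite -(rep_eq (rep_sim u)) eqxx big1 ?addr0.
    rewrite yb_repu //.
    have H := Hsign _ _ (rep_sim u).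
    rewrite -[f u](sgnMK (oi u)) H Hg -(sim_cfact kind (rep_sim u)) exprD.
    move: (g (rep u)) ((cfact kind u)%:R) ((-1) ^+ oi (rep u)) ((-1) ^+ oi u) => X1 X2 X3 X4.
    by ring.
  move=> b /andP [_ Hne]; case: eqP => Hb; last by rewrite mul0r.
  by rewrite yb_rep ?mulr0.
have -> : f u = 0 by apply/eqP/negPn/negP => /Hsupp; rewrite (negbTE Hu).
by rewrite big1 // => b Hb; rewrite yb0 ?mulr0.
Qed.

End Alg.

Section Alg2.
Variables (BV BW : finType) (kV : BV -> ckind) (kW : BW -> ckind)
  (rV : BV -> nat) (rW : BW -> nat) (d1 d2 : nat) (R : comNzRingType).

Local Notation sg n := ((-1) ^+ n : R).

Definition P2 (T : tens2 R BV BW d1 d2) : Prop :=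
  [/\ forall q, T q != 0 -> seqok kV q.1 && seqok kW q.2,
      forall q q', seq_sim q.1 q'.1 -> seq_sim q.2 q'.2 ->
        T q * sg (odd_inv kV rV q.1 + odd_inv kW rW q.2) =
        T q' * sg (odd_inv kV rV q'.1 + odd_inv kW rW q'.2)
    & exists g : tens2 R BV BW d1 d2,
        forall q, T q = (cfact kV q.1 * cfact kW q.2)%:R * g q].

Lemma mGamma2_P2 T : in_mGamma2 kV kW rV rW T -> P2 T.
Proof.
case=> c ->; split.
- move=> q; rewrite ffunE => Hq; apply/negPn/negP => Hnot; move/eqP: Hq; apply.
  apply: big1 => b Hb; apply: big1 => b' Hb'.
  case/nandP: Hnot => Hn; first by rewrite (yb0 rV R Hb Hn) mul0r mulr0.
  by rewrite (yb0 rW R Hb' Hn) mulr0 mulr0.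
- move=> q q' H1 H2; rewrite !ffunE !mulr_suml; apply: eq_bigr => b Hb.
  rewrite !mulr_suml; apply: eq_bigr => b' Hb'.
  have E : forall (x y1 y2 : R) n1 n2, x * (y1 * y2) * sg (n1 + n2) =
      x * ((y1 * sg n1) * (y2 * sg n2)) by move=> x y1 y2 n1 n2; rewrite exprD; ring.
  rewrite !E !yb_sign.
  have -> : seq_sim b q.1 = seq_sim b q'.1.
    by apply/idP/idP => H; [apply: sim_trans H H1 | apply: sim_trans H (sim_sym H1)].
  have -> : seq_sim b' q.2 = seq_sim b' q'.2 => //.
  by apply/idP/idP => H; [apply: sim_trans H H2 | apply: sim_trans H (sim_sym H2)].
- exists [ffun q => \sum_(b | seqok kV b) \sum_(b' | seqok kW b')
                      c b b' * (xb kV rV b q.1 * xb kW rW b' q.2)] => q.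
  rewrite !ffunE mulr_sumr; apply: eq_bigr => b _; rewrite mulr_sumr; apply: eq_bigr => b' _.
  rewrite !ybE natrM.
  move: (c b b') ((cfact kV q.1)%:R) ((cfact kW q.2)%:R) (xb kV rV (R:=R) b q.1) (xb kW rW (R:=R) b' q.2).
  by move=> X1 X2 X3 X4 X5; ring.
Qed.

Lemma P2_mGamma2 T : P2 T -> in_mGamma2 kV kW rV rW T.
Proof.
case=> Hsupp Hsign [g Hg].
exists (fun b b' => if (b == rep b) && (b' == rep b') then g (b, b') else 0).
apply/ffunP => -[u1 u2]; rewrite ffunE /=.
case: (boolP (seqok kV u1 && seqok kW u2)) => Hu; last first.
  have -> : T (u1, u2) = 0 by apply/eqP/negPn/negP => /Hsupp; rewrite (negbTE Hu).
  symmetry; apply: big1 => b Hb; apply: big1 => b' Hb'.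
  case/nandP: Hu => Hn; first by rewrite (yb0 rV R Hb Hn) mul0r mulr0.
  by rewrite (yb0 rW R Hb' Hn) mulr0 mulr0.
case/andP: Hu => Hu1 Hu2.
rewrite (bigD1 (rep u1)) /=; last by rewrite -(sim_seqok kV (rep_sim u1)).
rewrite [X in _ = _ + X]big1 ?addr0; last first.
  move=> b /andP [_ Hne]; apply: big1 => b' _.
  case: eqP => Hb /=; last by rewrite mul0r.
  by rewrite (yb_rep kV rV R Hb Hne) mul0r mulr0.
rewrite (bigD1 (rep u2)) /=; last by rewrite -(sim_seqok kW (rep_sim u2)).
rewrite [X in _ = _ + X]big1 ?addr0; last first.
  move=> b' /andP [_ Hne]; case: eqP => Hb /=; last by rewrite mul0r.
  by case: eqP => Hb' /=; [rewrite (yb_rep kW rW R Hb' Hne) mulr0 mulr0 | rewrite mul0r].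
rewrite -(rep_eq (rep_sim u1)) -(rep_eq (rep_sim u2)) !eqxx /=.
rewrite !yb_repu //.
have H := Hsign (u1, u2) (rep u1, rep u2) (rep_sim u1) (rep_sim u2).
rewrite -[T _](sgnMK (odd_inv kV rV u1 + odd_inv kW rW u2)) H Hg /=.
rewrite -(sim_cfact kV (rep_sim u1)) -(sim_cfact kW (rep_sim u2)) !exprD natrM.
move: (g (rep u1, rep u2)) ((cfact kV u1)%:R) ((cfact kW u2)%:R).
move: ((-1) ^+ odd_inv kV rV u1 : R) ((-1) ^+ odd_inv kW rW u2 : R).
move: ((-1) ^+ odd_inv kV rV (rep u1) : R) ((-1) ^+ odd_inv kW rW (rep u2) : R).
by move=> X1 X2 X3 X4 X5 X6 X7; ring.
Qed.

End Alg2.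

Section Signs.
Variable R : comNzRingType.

Lemma sign_alg (A A' a a' : R) (m m' : nat) :
  A * (-1) ^+ m = A' * (-1) ^+ m' -> a * (-1) ^+ m = a' * (-1) ^+ m' -> A * a = A' * a'.
Proof.
move=> H1 H2; rewrite -[A * a](sgnMK m) -[A' * a'](sgnMK m').
have E : forall (X Y z : R), X * Y * z * z = (X * z) * (Y * z) by move=> *; ring.
by rewrite !E H1 H2.
Qed.

Lemma sgn_cancel (x y : R) p : (-1) ^+ p * x * (y * (-1) ^+ p) = x * y.
Proof.
rewrite [y * _]mulrC mulrACA -exprD addnn -signr_odd odd_double /=.
by rewrite expr0 mul1r.
Qed.

Lemma sign_solve (x y : R) (a p : nat) :
  x * (-1) ^+ a = y * ((-1) ^+ a * (-1) ^+ p) -> (-1) ^+ p * x = y.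
Proof.
move=> E.
have -> : y = y * ((-1) ^+ a * (-1) ^+ p) * ((-1) ^+ a * (-1) ^+ p).
  by rewrite -exprD sgnMK.
by rewrite -E mulrA sgnMK mulrC.
Qed.

Lemma sign_zero (x y : R) (a b : nat) : x * (-1) ^+ a = y * (-1) ^+ b -> x = 0 -> y = 0.
Proof.
move=> E Hx; rewrite -[y](sgnMK b) -E Hx !mul0r.
by [].
Qed.

Lemma sg_perm (B : finType) (kind : B -> ckind) (rk : B -> nat) (d : nat)
  (Hrk : injective rk) (w : Seqs B d) (s : 'S_d) : seqok kind w ->
  (-1) ^+ odd_inv kind rk [ffun k => w (s k)] =
  (-1) ^+ odd_inv kind rk w * (-1) ^+ perm_sign_exp kind s w :> R.
Proof.
move=> Hw; rewrite -signr_odd oinv_perm ?signr_addb ?signr_odd //.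
move=> k l Hkl Ok Ol; apply/negP => /eqP /Hrk Heq.
by move: (forallP (forallP Hw k) l); rewrite Hkl Heq eqxx /= Ol.
Qed.

Lemma K_const (B : finType) (kind : B -> ckind) (rk rk' : B -> nat) (d : nat)
  (Hrk : injective rk) (Hrk' : injective rk') (w w' : Seqs B d) :
  seqok kind w -> seq_sim w w' ->
  (-1) ^+ odd_inv kind rk w * (-1) ^+ odd_inv kind rk' w =
  (-1) ^+ odd_inv kind rk w' * (-1) ^+ odd_inv kind rk' w' :> R.
Proof.
move=> Hw /existsP [s /eqP ->].
rewrite !sg_perm //.
by rewrite mulrACA mulrA sgnMK.
Qed.

End Signs.

Lemma tact_pt (B : finType) (kind : B -> ckind) (n : nat) (R : comNzRingType)
  (s : 'S_n) (f : tens R B n) (u : Seqs B n) :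
  tact kind s f u = f [ffun k => u ((s^-1)%g k)] *
    (-1) ^+ perm_sign_exp kind s [ffun k => u ((s^-1)%g k)].
Proof.
rewrite ffunE (bigD1 [ffun k => u ((s^-1)%g k)]) //= big1 ?addr0.
  have -> : [ffun k => [ffun k0 => u ((s^-1)%g k0)] (s k)] = u.
    by apply/ffunP => k; rewrite !ffunE permK.
  by rewrite ffunE eqxx mulr1.
move=> b Hb; rewrite ffunE; case: eqP => H; last by rewrite !mulr0.
case/eqP: Hb; apply/ffunP => k; rewrite H !ffunE.
by rewrite permKV.
Qed.

Lemma comp_inv (B : finType) (n : nat) (u w : Seqs B n) (s : 'S_n) :
  [ffun k => u ((s^-1)%g k)] = w -> u = [ffun k => w (s k)].
Proof. by move=> <-; apply/ffunP => k; rewrite !ffunE permK. Qed.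

Lemma cnt_true (B : finType) n (b : Seqs B n) : cnt b (fun _ => true) = n.
Proof.
by rewrite /cnt card_set_sum /= sum1_card card_ord.
Qed.

Section Main.
Variables (BV BW : finType) (kV : BV -> ckind) (kW : BW -> ckind) (d : nat).
Local Notation kU := (sum_kind kV kW).
Local Notation Q d1 := (Seqs BV d1 * Seqs BW (d - d1))%type.
Local Notation cc q := (concat q.1 q.2).

Lemma emb_concat (R : comNzRingType) (d1 : 'I_d.+1) (T : tens2 R BV BW d1 (d - d1)) (q : Q d1) :
  emb T (cc q) = T q.
Proof.
rewrite ffunE (bigD1 q) //= eqxx mulr1 big1 ?addr0 // => q' Hne.
case: eqP => H; last by rewrite mulr0.
case: (concat_inj H) => H1 H2; case/eqP: Hne.
by case: q q' H1 H2 {H} => [a b] [a' b'] /= -> ->.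
Qed.

Lemma cnt_inl (d1 : 'I_d.+1) (q : Q d1) (s : 'S_d) :
  cnt [ffun k => cc q (s k)] (@is_inl BV BW) = d1.
Proof. by rewrite cnt_perm cnt_concat /= cnt_true cnt_false addn0. Qed.

Lemma UQ1 (d1 d1' : 'I_d.+1) (q : Q d1) (q' : Q d1') (s s' : 'S_d) :
  [ffun k => cc q (s k)] = [ffun k => cc q' (s' k)] -> d1 = d1'.
Proof.
move=> H; apply: val_inj => /=.
by rewrite -(cnt_inl q s) -(cnt_inl q' s') H.
Qed.

Lemma UQ2 (d1 : 'I_d.+1) (q q' : Q d1) (s s' : 'S_d) :
  shortest_rep d1 s -> shortest_rep d1 s' ->
  [ffun k => cc q (s k)] = [ffun k => cc q' (s' k)] -> s = s'.
Proof.
move=> Hs Hs' H.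
have Hd : (d1 <= d)%N by rewrite -ltnS.
apply: (mono_uniq Hd); [exact: shortest_mono | exact: shortest_mono|] => k.
have := congr1 (fun f : Seqs (BV + BW)%type d => is_inl (f k)) H.
have Hk : forall (q0 : Q d1) (s0 : 'S_d) k0, [ffun k => cc q0 (s0 k)] k0 = cc q0 (s0 k0).
  by move=> *; rewrite ffunE.
by cbv beta; rewrite !Hk !isl_concat.
Qed.

Lemma Phi_pt (R : comNzRingType) (d1 : 'I_d.+1) (q : Q d1) (s : 'S_d) :
  shortest_rep d1 s -> forall F : forall d1 : 'I_d.+1, tens2 R BV BW d1 (d - d1),
  Phi kU F [ffun k => cc q (s k)] = (-1) ^+ perm_sign_exp kU s (cc q) * F d1 q.
Proof.
move=> Hs F; rewrite ffunE (bigD1 d1) //= big1 ?addr0; last first.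
  move=> d1' Hne; rewrite ffunE; apply: big1 => s' Hs'.
  rewrite tact_pt ffunE big1 ?mul0r // => q' _.
  case: eqP => H; last by rewrite mulr0.
  have := UQ1 (comp_inv H); move=> E; by rewrite E eqxx in Hne.
rewrite ffunE (bigD1 s) //= big1 ?addr0; last first.
  move=> s' /andP [Hs' Hne]; rewrite tact_pt ffunE big1 ?mul0r // => q' _.
  case: eqP => H; last by rewrite mulr0.
  by have := UQ2 Hs Hs' (comp_inv H) => E; rewrite E eqxx in Hne.
rewrite tact_pt.
have -> : [ffun k => [ffun k0 => cc q (s k0)] ((s^-1)%g k)] = cc q.
  by apply/ffunP => k; rewrite !ffunE permKV.
by rewrite emb_concat mulrC.
Qed.

Lemma EX (u : Seqs (BV + BW)%type d) :
  exists (d1 : 'I_d.+1) (q : Q d1) (s : 'S_d),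
    shortest_rep d1 s /\ u = [ffun k => cc q (s k)].
Proof.
pose S := [set k | is_inl (u k)].
have HS : (#|S| < d.+1)%N by rewrite ltnS; have := max_card S; rewrite card_ord.
pose d1 : 'I_d.+1 := Ordinal HS.
pose t := canp S.
have Hsh : shortest_rep d1 t by apply: mono_shortest; apply: canp_mono.
have H1 : forall i : 'I_d1, exists x, u ((t^-1)%g (lk i)) = inl x.
  move=> i; have : (t ((t^-1)%g (lk i)) < #|S|)%N by rewrite permKV /=.
  rewrite canp_blk inE; case: (u _) => [x|y] //= _; by exists x.
have H2 : forall j : 'I_(d - d1), exists y, u ((t^-1)%g (rkk j)) = inr y.
  move=> j; have : ~~ (t ((t^-1)%g (rkk j)) < #|S|)%N by rewrite permKV /= -leqNgt leq_addr.
  rewrite canp_blk inE; case: (u _) => [x|y] //= _; by exists y.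
case: (fin_all_exists H1) => f1 Hf1; case: (fin_all_exists H2) => f2 Hf2.
exists d1, ([ffun i => f1 i], [ffun j => f2 j]), t; split => //.
apply/ffunP => k; rewrite ffunE /=.
case: (ord_cases d1 (t k)) => [[i Hi]|[j Hj]].
  by rewrite Hi concat_lk ffunE -Hf1 -Hi permK.
by rewrite Hj concat_rk ffunE -Hf2 -Hj permK.
Qed.

Variables (rV : BV -> nat) (rW : BW -> nat) (rU : (BV + BW)%type -> nat).
Hypotheses (HrV : injective rV) (HrW : injective rW) (HrU : injective rU).
Variable R : comNzRingType.

Local Notation rS := (rS rV rW).
Let HrS : injective rS := rS_inj HrV HrW.

Lemma Phi_homog (F : forall d1 : 'I_d.+1, tens2 R BV BW d1 (d - d1)) (p : bool) :
  (forall d1 : 'I_d.+1, homog2 kV kW p (F d1)) -> homog kU p (Phi kU F).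
Proof.
move=> H u Hu; have [d1 [q [s [Hs Eu]]]] := EX u; subst u.
move: Hu; rewrite Phi_pt // => Hu.
have HF : F d1 q != 0 by apply: contraNneq Hu => ->; rewrite mulr0.
have := H d1 q HF; rewrite -parity_concat => <-.
by rewrite /seq_parity; have := cnt_perm (cc q) s (fun x => is_odd (kU x)); rewrite /cnt => ->.
Qed.

Lemma Phi_inj (F G : forall d1 : 'I_d.+1, tens2 R BV BW d1 (d - d1)) :
  Phi kU F = Phi kU G -> forall d1 : 'I_d.+1, F d1 = G d1.
Proof.
move=> H d1; apply/ffunP => q.
have Hs : shortest_rep d1 (1%g : 'S_d) by apply: mono_shortest; apply: young1.
have := congr1 (fun f : tens R (BV + BW)%type d => f [ffun k => cc q ((1%g : 'S_d) k)]) H.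
rewrite /= !Phi_pt //.
move/(congr1 (fun x => (-1) ^+ perm_sign_exp kU 1%g (cc q) * x)).
by rewrite !signrMK.
Qed.

Lemma Phi_land (F : forall d1 : 'I_d.+1, tens2 R BV BW d1 (d - d1)) :
  (forall d1 : 'I_d.+1, in_mGamma2 kV kW rV rW (F d1)) -> in_mGamma kU rU (Phi kU F).
Proof.
move=> HF; apply: P_mGamma.
have P2F : forall d1, P2 kV kW rV rW (F d1) by move=> d1; apply: mGamma2_P2.
have [G HG] : exists G : forall d1 : 'I_d.+1, tens2 R BV BW d1 (d - d1),
    forall d1 q, F d1 q = (cfact kV q.1 * cfact kW q.2)%:R * G d1 q.
  apply: (@fin_all_exists _ (fun d1 : 'I_d.+1 => tens2 R BV BW d1 (d - d1))
    (fun d1 g => forall q, F d1 q = (cfact kV q.1 * cfact kW q.2)%:R * g q)).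
  by move=> d1; case: (P2F d1) => _ _ [g Hg]; exists g.
split.
- move=> u Hu; have [d1 [q [s [Hs Eu]]]] := EX u; subst u.
  move: Hu; rewrite Phi_pt // => Hu.
  have HFq : F d1 q != 0 by apply: contraNneq Hu => ->; rewrite mulr0.
  case: (P2F d1) => Hsupp _ _.
  have := Hsupp q HFq; rewrite -seqok_concat => Hcq.
  by rewrite -(sim_seqok kU (sim_perm (cc q) s)).
- move=> u u' Hsim.
  have [d1 [q [s [Hs Eu]]]] := EX u; subst u.
  have [d1' [q' [s' [Hs' Eu']]]] := EX u'; subst u'.
  have Hd : d1 = d1'.
    apply: val_inj => /=; rewrite -(cnt_inl q s) -(cnt_inl q' s').
    exact: sim_cnt.
  subst d1'.
  have Hcc : seq_sim (cc q) (cc q').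
    apply: sim_trans (sim_perm (cc q) s) _; apply: sim_trans Hsim _.
    exact: sim_sym (sim_perm _ _).
  move: (Hcc); rewrite sim_concat => /andP [H1 H2].
  case: (P2F d1) => Hsupp Hsign _.
  have E := Hsign q q' H1 H2.
  rewrite !Phi_pt //.
  case: (eqVneq (F d1 q) 0) => HFq.
    have HFq' := sign_zero E HFq.
    by rewrite HFq HFq' !mulr0 !mul0r.
  have Hw : seqok kU (cc q) by rewrite seqok_concat; apply: Hsupp.
  have Hw' : seqok kU (cc q') by rewrite -(sim_seqok kU Hcc).
  rewrite !(sg_perm _ HrU) // !sgn_cancel.
  apply: (sign_alg (m := odd_inv kU rS (cc q)) (m' := odd_inv kU rS (cc q'))).
    by rewrite !oinv_concat.
  exact: K_const.
- exists (fun u => Phi kU G u) => u.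
  have [d1 [q [s [Hs Eu]]]] := EX u; subst u.
  rewrite !Phi_pt // HG -(sim_cfact kU (sim_perm (cc q) s)) cfact_concat.
  by rewrite mulrCA.
Qed.

Lemma Phi_surj (f : tens R (BV + BW)%type d) : in_mGamma kU rU f ->
  exists2 F : forall d1 : 'I_d.+1, tens2 R BV BW d1 (d - d1),
    (forall d1 : 'I_d.+1, in_mGamma2 kV kW rV rW (F d1)) & Phi kU F = f.
Proof.
move/mGamma_P => [Hsupp Hsign [g Hg]].
exists (fun d1 => [ffun q => f (cc q)]).
  move=> d1; apply: P2_mGamma2; split.
  - by move=> q; rewrite ffunE => /Hsupp; rewrite seqok_concat.
  - move=> q q' H1 H2; rewrite !ffunE.
    have Hs := sim_concatP H1 H2.
    have E := Hsign _ _ Hs.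
    case: (eqVneq (f (cc q)) 0) => H0.
      by rewrite H0 (sign_zero E H0) !mul0r.
    have Hw : seqok kU (cc q) by apply: Hsupp.
    rewrite -!oinv_concat.
    apply: sign_alg E _.
    by rewrite mulrC [RHS]mulrC; apply: K_const.
  - exists [ffun q => g (cc q)] => q.
    by rewrite !ffunE Hg cfact_concat natrM.
apply/ffunP => u; have [d1 [q [s [Hs Eu]]]] := EX u; subst u.
rewrite Phi_pt // ffunE.
have E := Hsign _ _ (sim_perm (cc q) s).
case: (eqVneq (f (cc q)) 0) => H0.
  by rewrite H0 mulr0 (sign_zero E H0).
have Hw : seqok kU (cc q) by apply: Hsupp.
move: E; rewrite (sg_perm _ HrU) //.
exact: sign_solve.
Qed.

End Main.

Unset Implicit Arguments.

Theorem lemma3p5 (R : idomainType)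
  (R_pid : principal_ideal_domain R) (R_char0 : char0 R)
  (BV BW : finType) (kV : BV -> ckind) (kW : BW -> ckind)
  (rV : BV -> nat) (rW : BW -> nat) (rU : (BV + BW)%type -> nat)
  (rV_inj : injective rV) (rW_inj : injective rW) (rU_inj : injective rU)
  (d : nat) :
  let kU := sum_kind kV kW in
  let adm (F : forall d1 : 'I_d.+1, tens2 R BV BW d1 (d - d1)) :=
    forall d1 : 'I_d.+1, in_mGamma2 kV kW rV rW (F d1) in
  [/\ (* the map lands in ~Gamma^d (V ⊕ W) *)
      forall F, adm F -> in_mGamma kU rU (Phi kU F),
      (* it is injective *)
      forall F G, adm F -> adm G -> Phi kU F = Phi kU G ->
        forall d1 : 'I_d.+1, F d1 = G d1,
      (* it is surjective onto ~Gamma^d (V ⊕ W) *)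
      forall f : tens R (BV + BW)%type d, in_mGamma kU rU f ->
        exists2 F, adm F & Phi kU F = f
    & (* it is even (preserves the Z/2-grading) *)
      forall (F : forall d1 : 'I_d.+1, tens2 R BV BW d1 (d - d1)) (p : bool),
        (forall d1 : 'I_d.+1, homog2 kV kW p (F d1)) -> homog kU p (Phi kU F)].
Proof.
move=> kU adm; split.
- by move=> F HF; apply: (Phi_land rV_inj rW_inj rU_inj).
- by move=> F G _ _ H; apply: Phi_inj H.
- by move=> f Hf; apply: (Phi_surj rV_inj rW_inj rU_inj).
- by move=> F p H; apply: Phi_homog.
Qed.
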